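(* An element of Thompson's group $F$ represented by a tree diagram $(T_+,T_-)$ with $n$ leaves lies in the $3$-colorable subgroup $\mathcal{F}$ if and only if $\omega(\alpha_k^+)=\omega(\alpha_k^-)$ for all $k=0,\dots,n-1$. Here $\alpha_k^{+}$ and $\alpha_k^-$ denote the binary words of the $k$-th leaves (from the left) of $T_+$ and $T_-$, respectively.
   Context: Thompson's group $F$ is the group of piecewise linear homeomorphisms of $[0,1]$ that are differentiable except at finitely many dyadic rationals with slopes in $2^{\mathbb{Z}}$. A tree diagram $(T_+,T_-)$ is a pair of finite rooted planar binary trees with the same number $n$ of leaves. Each vertex is encoded by the binary word of its path from the root ($0$ = left edge, $1$ = right edge). The diagram represents the element of $F$ mapping $[.\alpha_k^+,.\alpha_k^++2^{-|\alpha_k^+|}]$ affinely onto $[.\alpha_k^-,.\alpha_k^-+2^{-|\alpha_k^-|}]$ for each $k$, where $.\alpha$ denotes the dyadic rational with binary digits $\alpha$. Each element has a unique reduced diagram. The $3$-colorable subgroup $\mathcal{F}$: draw $T_+$ with leaves at $(k,0)$ and root on the line $y=1$, and $T_-$ mirrored below with the same leaves and root on $y=-1$. The edges divide the strip $\{-1\le y\le1\}$ into regions. $\mathcal{F}$ consists of the elements for which these regions admit a coloring with three colors so that regions sharing an edge have different colors. The weight $\omega:\{\text{finite binary words}\}\to\mathbb{Z}_3$ is defined via triples $(L(z),R(z),B(z))$: - $(L,R,B)(\emptyset)=(0,1,2)$, - $(L,R,B)(z0)=(L(z),B(z),R(z))$, - $(L,R,B)(z1)=(B(z),R(z),L(z))$,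 with $\omega(z)=L(z)$. Geometrically, $\omega(z)$ is the color of the region to the left of vertex $z$ in the proper $3$-coloring of the complement of the rooted planar binary tree in which the regions left of, right of and below the root are colored $0,1,2$. *)

(* Defs.v *)
From HB Require Import structures.
From mathcomp Require Import all_boot all_order all_algebra.
Set Implicit Arguments. Unset Strict Implicit. Unset Printing Implicit Defensive.
Import Order.TTheory GRing.Theory Num.Theory.

Inductive tree : Type := Leaf | Node of tree & tree.

Fixpoint nleaves (t : tree) : nat :=
  match t with Leaf => 1 | Node l r => nleaves l + nleaves r end.

(* Binary words (false = 0 = left edge, true = 1 = right edge) of the leaves,
   listed from left to right; the first letter is the edge at the root. *)
Fixpoint leaves (t : tree) : seq (seq bool) :=
  match t with
  | Leaf => [:: [::]]
  | Node l r => map (cons false) (leaves l) ++ map (cons true) (leaves r)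
  end.

(* The weight omega.  Colors are the naturals 0,1,2 (representing Z_3). *)
Definition lrb_step (t : nat * nat * nat) (b : bool) : nat * nat * nat :=
  let: (L, R, B) := t in if b then (B, R, L) else (L, B, R).

Definition LRB (z : seq bool) : nat * nat * nat := foldl lrb_step (0, 1, 2) z.

Definition omega (z : seq bool) : nat := (LRB z).1.1.

(* Regions of the strip picture of a diagram with n leaves:
   region k (0 <= k < n) is the region immediately to the left of leaf k
   (region 0 = the unbounded left region), region n is the unbounded right
   region.  Each edge of T_+ (resp. T_-) separates two regions; for an
   internal vertex whose subtree has leaves a..e-1 and whose right child's
   subtree starts at leaf m, the edge to the left child separates regions a
   and m and the edge to the right child separates regions m and e. *)
Fixpoint edge_adj (t : tree) (a : nat) : seq (nat * nat) :=
  match t with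
  | Leaf => [::]
  | Node l r =>
      let m := a + nleaves l in
      [:: (a, m); (m, m + nleaves r)] ++ edge_adj l a ++ edge_adj r m
  end.

(* The diagram (Tp, Tm) is 3-colorable: the regions admit a coloring with
   three colors such that regions sharing an edge get different colors; the
   two unbounded regions (left, right) are also required to be different. *)
Definition colorable (Tp Tm : tree) : Prop :=
  exists c : nat -> 'I_3,
    c 0%N != c (nleaves Tp) /\
    forall p, p \in edge_adj Tp 0 ++ edge_adj Tm 0 -> c p.1 != c p.2.

(* The element of F represented by a diagram, as a function on [0,1]. *)
Section PL.
Variable R : realFieldType.
Local Open Scope ring_scope.

Fixpoint dval (w : seq bool) : R :=
  match w with [::] => 0 | b :: w' => ((b%:R : R) + dval w') / 2 end.

Definition dwidth (w : seq bool) : R := (2 ^+ size w)^-1.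

(* affine map [.p, .p + 2^-|p|] -> [.m, .m + 2^-|m|] *)
Definition aff (p m : seq bool) (x : R) : R :=
  dval m + (x - dval p) * (dwidth m / dwidth p).

Fixpoint pl_eval (ps : seq (seq bool * seq bool)) (x : R) : R :=
  match ps with
  | [::] => x
  | [:: (p, m)] => aff p m x
  | (p, m) :: ps' => if x < dval p + dwidth p then aff p m x else pl_eval ps' x
  end.

Definition diag_fun (Tp Tm : tree) : R -> R :=
  pl_eval (zip (leaves Tp) (leaves Tm)).

Definition diagram (Tp Tm : tree) : Prop := nleaves Tp = nleaves Tm.

Definition represents (Tp Tm : tree) (g : R -> R) : Prop :=
  diagram Tp Tm /\ forall x : R, 0 <= x <= 1 -> diag_fun Tp Tm x = g x.

Definition in_F3 (g : R -> R) : Prop :=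
  exists Tp Tm, represents Tp Tm g /\ colorable Tp Tm.
End PL.

(* Main.v *)
Require Import Defs.
From mathcomp Require Import all_boot all_order all_algebra.
From mathcomp Require Import zify ring lra.
Set Implicit Arguments. Unset Strict Implicit. Unset Printing Implicit Defensive.
Import Order.TTheory GRing.Theory Num.Theory.

Definition tL (t : nat * nat * nat) := t.1.1.
Definition tR (t : nat * nat * nat) := t.1.2.
Definition tB (t : nat * nat * nat) := t.2.
Definition perm3 (t : nat * nat * nat) : Prop :=
  tL t < 3 /\ tR t < 3 /\ tB t < 3 /\ tL t <> tR t /\ tL t <> tB t /\ tR t <> tB t.

Lemma perm3_step t b : perm3 t -> perm3 (lrb_step t b).
Proof. case: t => [[x y] z]; case: b; rewrite /perm3 /tL /tR /tB /=; lia. Qed.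

Lemma perm3_foldl w t : perm3 t -> perm3 (foldl lrb_step t w).
Proof. elim: w t => [|b w IH] t //= H; apply: IH; exact: perm3_step. Qed.

Lemma perm3_eq t t' : perm3 t -> perm3 t' -> tL t = tL t' -> tR t = tR t' -> t = t'.
Proof.
case: t => [[x y] z]; case: t' => [[x' y'] z']; rewrite /perm3 /tL /tR /tB /= => H1 H2 E1 E2; subst.
by have -> : z = z' by lia.
Qed.

Fixpoint colT (T : tree) (t : nat * nat * nat) (i : nat) : nat :=
  match T with
  | Leaf => if i == 0 then tL t else tR t
  | Node l r => if i <= nleaves l then colT l (lrb_step t false) i
                else colT r (lrb_step t true) (i - nleaves l)
  end.

Lemma nleaves_gt0 T : 0 < nleaves T.
Proof. elim: T => //= l IHl r IHr; lia. Qed.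

Lemma size_leaves T : size (leaves T) = nleaves T.
Proof. elim: T => //= l IHl r IHr; by rewrite size_cat !size_map IHl IHr. Qed.

Lemma tL_f t : tL (lrb_step t false) = tL t. Proof. by case: t => [[]]. Qed.
Lemma tR_f t : tR (lrb_step t false) = tB t. Proof. by case: t => [[]]. Qed.
Lemma tL_t t : tL (lrb_step t true) = tB t. Proof. by case: t => [[]]. Qed.
Lemma tR_t t : tR (lrb_step t true) = tR t. Proof. by case: t => [[]]. Qed.

Lemma colT_0 T t : colT T t 0 = tL t.
Proof. elim: T t => //= l IHl r IHr t. by rewrite IHl tL_f. Qed.

Lemma colT_n T t : colT T t (nleaves T) = tR t.
Proof.
elim: T t => //= l IHl r IHr t.
have := nleaves_gt0 r => H.
have -> : (nleaves l + nleaves r <= nleaves l) = false by lia.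
by rewrite addKn IHr tR_t.
Qed.

Lemma colT_node_l l r t i : i <= nleaves l ->
  colT (Node l r) t i = colT l (lrb_step t false) i.
Proof. by move=> /= ->. Qed.

Lemma colT_node_r l r t j :
  colT (Node l r) t (nleaves l + j) = colT r (lrb_step t true) j.
Proof.
case: j => [|j] /=.
  by rewrite addn0 leqnn colT_n colT_0 tR_f tL_t.
have -> : (nleaves l + j.+1 <= nleaves l) = false by lia.
by rewrite addKn.
Qed.

Lemma fcons t b w : foldl lrb_step t (b :: w) = foldl lrb_step (lrb_step t b) w.
Proof. by []. Qed.

Lemma colT_leafL T t k : k < nleaves T ->
  colT T t k = tL (foldl lrb_step t (nth [::] (leaves T) k)).
Proof.
elim: T t k => [|l IHl r IHr] t k.
  by case: k.
rewrite [nleaves _]/= [leaves _]/= => Hk; rewrite nth_cat size_map size_leaves.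
case: (ltnP k (nleaves l)) => H1.
  rewrite (nth_map [::]) ?size_leaves // ?fcons -IHl //.
  by rewrite colT_node_l ?(ltnW H1).
rewrite (nth_map [::]) ?size_leaves ?fcons; last by lia.
have -> : k = nleaves l + (k - nleaves l) by lia.
rewrite colT_node_r addKn IHr //; lia.
Qed.

Lemma colT_leafR T t k : k < nleaves T ->
  colT T t k.+1 = tR (foldl lrb_step t (nth [::] (leaves T) k)).
Proof.
elim: T t k => [|l IHl r IHr] t k.
  by case: k.
rewrite [nleaves _]/= [leaves _]/= => Hk; rewrite nth_cat size_map size_leaves.
case: (ltnP k (nleaves l)) => H1.
  rewrite (nth_map [::]) ?size_leaves // ?fcons -IHl //.
  by rewrite colT_node_l.
rewrite (nth_map [::]) ?size_leaves ?fcons; last by lia.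
have -> : k.+1 = nleaves l + (k - nleaves l).+1 by lia.
rewrite colT_node_r IHr //; lia.
Qed.

Lemma colT_lt3 T t i : perm3 t -> colT T t i < 3.
Proof.
elim: T t i => [|l IHl r IHr] t i /= H.
  case: (i == 0); rewrite /perm3 in H; lia.
case: (i <= nleaves l); [apply: IHl | apply: IHr]; exact: perm3_step.
Qed.

Lemma colT_proper T t a p : perm3 t -> p \in edge_adj T a ->
  [/\ a <= p.1 <= a + nleaves T, a <= p.2 <= a + nleaves T &
      colT T t (p.1 - a) <> colT T t (p.2 - a)].
Proof.
elim: T t a => [|l IHl r IHr] t a Ht //.
change (nleaves (Node l r)) with (nleaves l + nleaves r).
rewrite [edge_adj _ _]/= !inE mem_cat.
case/or3P => [/eqP-> | /eqP-> | /orP[Hp | Hp]]; cbn [fst snd].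
- rewrite subnn addKn colT_0 colT_node_l // colT_n tR_f.
  split; try lia. rewrite /perm3 in Ht; lia.
- rewrite -addnBAC // subnn add0n -addnA addKn colT_node_r -(addn0 (nleaves l)).
  rewrite colT_node_r colT_0 colT_n tL_t tR_t.
  split; try lia. rewrite /perm3 in Ht; lia.
- have [H1 H2 H3] := IHl _ a (perm3_step false Ht) Hp.
  rewrite !colT_node_l; try lia. split => //; lia.
- have [H1 H2 H3] := IHr _ (a + nleaves l) (perm3_step true Ht) Hp.
  have E1 : p.1 - a = nleaves l + (p.1 - (a + nleaves l)) by lia.
  have E2 : p.2 - a = nleaves l + (p.2 - (a + nleaves l)) by lia.
  rewrite E1 E2 !colT_node_r. split => //; lia.
Qed.

Lemma colT_unique T a (c : nat -> nat) :
  (forall i, c i < 3) -> (forall p, p \in edge_adj T a -> c p.1 <> c p.2) ->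
  c a <> c (a + nleaves T) ->
  forall i, i <= nleaves T ->
  c (a + i) = colT T (c a, c (a + nleaves T), 3 - c a - c (a + nleaves T)) i.
Proof.
elim: T a => [|l IHl r IHr] a H3 Hp Hae i.
  by case: i => [|[|]] //; rewrite ?addn0.
change (nleaves (Node l r)) with (nleaves l + nleaves r) in Hae; change (nleaves (Node l r)) with (nleaves l + nleaves r).
have Hp' : forall p, p \in [:: (a, a + nleaves l); (a + nleaves l, a + nleaves l + nleaves r)]
   ++ edge_adj l a ++ edge_adj r (a + nleaves l) -> c p.1 <> c p.2 by exact: Hp.
clear Hp.
rewrite addnA in Hae *.
set m := a + nleaves l in Hp' Hae *.
set e := m + nleaves r in Hp' Hae *.
have Eam : c a <> c m by apply: (Hp' (a, m)); rewrite !inE eqxx.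
have Eme : c m <> c e by apply: (Hp' (m, e)); rewrite !inE eqxx orbT.
have Ecm : c m = 3 - c a - c e.
  have := H3 a; have := H3 m; have := H3 e; lia.
have Hs : c a + c e <= 3 by have := H3 a; have := H3 e; lia.
move=> Hi.
case: (leqP i (nleaves l)) => Hil.
  rewrite colT_node_l // IHl //.
  - congr colT; rewrite /= -/m; congr (_,_,_); lia.
  - by move=> p Hp; apply: Hp'; rewrite !mem_cat Hp orbT.
have -> : i = nleaves l + (i - nleaves l) by lia.
rewrite colT_node_r addnA -/m IHr //; last 2 first.
- by move=> p Hp; apply: Hp'; rewrite !mem_cat Hp !orbT.
- lia.
congr colT; rewrite /= -/e; congr (_,_,_); lia.
Qed.

Definition tmap (s : nat -> nat) (t : nat * nat * nat) :=
  (s (tL t), s (tR t), s (tB t)).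

Lemma tmap_step s t b : lrb_step (tmap s t) b = tmap s (lrb_step t b).
Proof. by case: t => [[x y] z]; case: b. Qed.

Lemma colT_tmap T s t i : colT T (tmap s t) i = s (colT T t i).
Proof.
elim: T t i => [|l IHl r IHr] t i; cbn [colT].
  by case: (i == 0).
by case: (i <= nleaves l); rewrite tmap_step ?IHl ?IHr.
Qed.

Definition t0 : nat * nat * nat := (0, 1, 2).
Lemma perm3_t0 : perm3 t0. Proof. rewrite /perm3 /t0 /tL /tR /tB /=; lia. Qed.

Definition CE (Tp Tm : tree) :=
  forall i, i <= nleaves Tp -> colT Tp t0 i = colT Tm t0 i.

Lemma colorable_CE Tp Tm : nleaves Tp = nleaves Tm -> colorable Tp Tm -> CE Tp Tm.
Proof.
move=> En [c [Hc0 Hc]] i Hi.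
pose cn := fun i => nat_of_ord (c i).
have H3 : forall i, cn i < 3 by move=> j; exact: ltn_ord.
have Hne : cn 0 <> cn (nleaves Tp) by move=> E; move/eqP: Hc0; apply; apply: val_inj; exact: E.
have Up := @colT_unique Tp 0 cn H3.
have Um := @colT_unique Tm 0 cn H3.
rewrite !add0n -En in Um Up.
have HcP : forall p, p \in edge_adj Tp 0 -> cn p.1 <> cn p.2.
  move=> p Hp E; move: (Hc p); rewrite mem_cat Hp /= => /(_ isT) /eqP; apply; exact: val_inj.
have HcM : forall p, p \in edge_adj Tm 0 -> cn p.1 <> cn p.2.
  move=> p Hp E; move: (Hc p); rewrite mem_cat Hp orbT => /(_ isT) /eqP; apply; exact: val_inj.
have E1 := Up HcP Hne i Hi.
have E2 := Um HcM Hne i Hi.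
rewrite add0n E2 in E1.
pose s := fun x => nth 0 [:: cn 0; cn (nleaves Tp); 3 - cn 0 - cn (nleaves Tp)] x.
have Es : (cn 0, cn (nleaves Tp), 3 - cn 0 - cn (nleaves Tp)) = tmap s t0 by [].
rewrite Es !colT_tmap in E1.
move: E1.
have := colT_lt3 Tp i perm3_t0; have := colT_lt3 Tm i perm3_t0.
have := H3 0; have := H3 (nleaves Tp).
rewrite /s.
move: (colT Tp t0 i) (colT Tm t0 i) (cn 0) (cn (nleaves Tp)) Hne => x y u v Huv.
case: x => [|[|[|?]]]; case: y => [|[|[|?]]] //=; lia.
Qed.

Lemma CE_colorable Tp Tm : nleaves Tp = nleaves Tm -> CE Tp Tm -> colorable Tp Tm.
Proof.
move=> En HC.
exists (fun i => inord (colT Tp t0 i) : 'I_3).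
split.
  rewrite colT_0 colT_n; apply/eqP => /(congr1 (@nat_of_ord 3)); rewrite !inordK //.
move=> p; rewrite mem_cat => /orP[Hp | Hp]; apply/eqP => /(congr1 (@nat_of_ord 3));
  rewrite !inordK ?colT_lt3 ?perm3_t0 //.
- have [_ _] := colT_proper perm3_t0 Hp; rewrite !subn0; exact.
- have [H1 H2] := colT_proper perm3_t0 Hp; rewrite !subn0 -En in H1 H2 *.
  rewrite !HC //.
Qed.

Lemma omega_CE Tp Tm : nleaves Tp = nleaves Tm ->
  (forall k, k < nleaves Tp ->
     omega (nth [::] (leaves Tp) k) = omega (nth [::] (leaves Tm) k)) <-> CE Tp Tm.
Proof.
move=> En; split.
- move=> H i Hi; case: (ltnP i (nleaves Tp)) => Hi'.
    rewrite colT_leafL // colT_leafL; [exact: H | by rewrite -En].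
  have -> : i = nleaves Tp by lia.
  rewrite colT_n; move: (colT_n Tm t0); rewrite -En => ->; done.
- move=> H k Hk; have := H k (ltnW Hk).
  by rewrite colT_leafL // colT_leafL // -En.
Qed.

Lemma CE_LRB Tp Tm : nleaves Tp = nleaves Tm -> CE Tp Tm ->
  forall k, k < nleaves Tp -> LRB (nth [::] (leaves Tp) k) = LRB (nth [::] (leaves Tm) k).
Proof.
move=> En H k Hk; rewrite /LRB; apply: perm3_eq; try apply: perm3_foldl; try exact: perm3_t0.
- rewrite -colT_leafL // -colT_leafL -?En // H // ltnW //.
- rewrite -colT_leafR // -colT_leafR -?En // H //.
Qed.

Section Real.
Variable R : realFieldType.
Local Open Scope ring_scope.

Lemma dwidth_cons (b : bool) u : dwidth R (b :: u) = dwidth R u / 2.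
Proof. by rewrite /dwidth /= exprS invfM mulrC. Qed.

Lemma dwidth_gt0 u : 0 < dwidth R u.
Proof. by rewrite /dwidth invr_gt0 exprn_gt0. Qed.

Lemma dwidth_cat u v : dwidth R (u ++ v) = dwidth R u * dwidth R v.
Proof. by rewrite /dwidth size_cat exprD invfM. Qed.

Lemma dval_cat u v : dval R (u ++ v) = dval R u + dwidth R u * dval R v.
Proof.
elim: u => [|b u IH] /=; first by rewrite /dwidth expr0 invr1 add0r mul1r.
rewrite IH dwidth_cons; by field.
Qed.

Lemma dval_ge0 u : 0 <= dval R u.
Proof.
elim: u => [|b u IH] //=; apply: divr_ge0 => //; apply: addr_ge0 => //; case: b => //.
Qed.

Lemma dval_le1 u : dval R u + dwidth R u <= 1.
Proof.
elim: u => [|b u IH] /=; first by rewrite /dwidth expr0 invr1 add0r.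
rewrite dwidth_cons.
have Hb : (b%:R : R) <= 1 by case: b.
lra.
Qed.

Lemma dval_inj u v : size u = size v -> dval R u = dval R v -> u = v.
Proof.
elim: u v => [|b u IH] [|b' v] //= [Hs] E.
have Hu := dval_ge0 u; have Hv := dval_ge0 v.
have Hu1 := dval_le1 u; have Hv1 := dval_le1 v.
have Hwu := dwidth_gt0 u; have Hwv := dwidth_gt0 v.
have Eb : b = b'.
  clear IH Hs; move: E; case: b; case: b' => //= E; exfalso; lra.
subst b'; congr (_ :: _); apply: IH => //.
move: E; clear Hs; lra.
Qed.

Lemma dwidth_inj u v : dwidth R u = dwidth R v -> size u = size v.
Proof.
rewrite /dwidth => /invr_inj.
rewrite -!(natrX R 2) => /eqP; rewrite eqr_nat eqn_exp2l // => /eqP //.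
Qed.

Lemma aff_cat p q u (x : R) : aff (p ++ u) (q ++ u) x = aff p q x.
Proof.
rewrite /aff !dval_cat !dwidth_cat.
have Hp := dwidth_gt0 p; have Hu := dwidth_gt0 u.
field; apply/andP; split; rewrite gt_eqF //.
Qed.

Definition inI (z : seq bool) (x : R) := dval R z <= x < dval R z + dwidth R z.

Lemma inI_cat p u x : inI (p ++ u) x -> inI p x.
Proof.
rewrite /inI dval_cat dwidth_cat => /andP [H1 H2].
have Hp := dwidth_gt0 p; have := dval_ge0 u; have := dval_le1 u.
have := dwidth_gt0 u.
move=> A B C; apply/andP; split.
- have : 0 <= dwidth R p * dval R u by apply: mulr_ge0; lra.
  lra.
- have : dwidth R p * dval R u + dwidth R p * dwidth R u <= dwidth R p.
    rewrite -mulrDr ler_piMr //; try exact: ltW; lra.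
  lra.
Qed.

Lemma inI_01 z x : inI z x -> 0 <= x <= 1.
Proof.
rewrite /inI => /andP [H1 H2]; have := dval_ge0 z; have := dval_le1 z. lra.
Qed.

Definition tp0 z := dval R z.
Definition tp1 z := dval R z + dwidth R z / 2.

Lemma inI_tp0 z : inI z (tp0 z).
Proof. rewrite /inI /tp0; have := dwidth_gt0 z; lra. Qed.
Lemma inI_tp1 z : inI z (tp1 z).
Proof. rewrite /inI /tp1; have := dwidth_gt0 z; lra. Qed.

Lemma aff_tp0 z w : aff z w (tp0 z) = dval R w.
Proof. by rewrite /aff /tp0 subrr mul0r addr0. Qed.

Lemma aff_tp1 z w : aff z w (tp1 z) = dval R w + dwidth R w / 2.
Proof.
rewrite /aff /tp1; have Hz := dwidth_gt0 z.
field; rewrite gt_eqF //.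
Qed.

Lemma aff_inj z w1 w2 : aff z w1 (tp0 z) = aff z w2 (tp0 z) ->
  aff z w1 (tp1 z) = aff z w2 (tp1 z) -> w1 = w2.
Proof.
rewrite !aff_tp0 !aff_tp1 => E0 E1.
have Ew : dwidth R w1 = dwidth R w2 by move: E1; rewrite E0; lra.
exact: dval_inj (dwidth_inj Ew) E0.
Qed.

Fixpoint chain (a : R) (ls : seq (seq bool)) (b : R) : Prop :=
  match ls with
  | [::] => a = b
  | l :: ls' => dval R l = a /\ chain (dval R l + dwidth R l) ls' b
  end.

Lemma chain_cat a ls b ls' c : chain a ls b -> chain b ls' c -> chain a (ls ++ ls') c.
Proof.
elim: ls a => [|l ls IH] a /=; first by move=> ->.
by move=> [H1 H2] H3; split => //; apply: IH.
Qed.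

Lemma chain_map0 a ls b : chain a ls b -> chain (a / 2) (map (cons false) ls) (b / 2).
Proof.
elim: ls a => [|l ls IH] a /=; first by move=> ->.
move=> [H1 H2]; split; first by rewrite H1 add0r.
have -> : (0 + dval R l) / 2 + dwidth R (false :: l) = (dval R l + dwidth R l) / 2.
  by rewrite dwidth_cons; field.
exact: IH.
Qed.

Lemma chain_map1 a ls b : chain a ls b -> chain ((1 + a) / 2) (map (cons true) ls) ((1 + b) / 2).
Proof.
elim: ls a => [|l ls IH] a /=; first by move=> ->.
move=> [H1 H2]; split; first by rewrite H1.
have -> : (1 + dval R l) / 2 + dwidth R (true :: l) = (1 + (dval R l + dwidth R l)) / 2.
  by rewrite dwidth_cons; field.
exact: IH.
Qed.

Lemma chain_leaves T : chain 0 (leaves T) 1.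
Proof.
elim: T => [|l IHl r IHr] /=.
  by split => //; rewrite /dwidth expr0 invr1 add0r.
apply: (@chain_cat _ _ (1 / 2)).
  by have := chain_map0 IHl; rewrite mul0r.
have := chain_map1 IHr; rewrite addr0.
have -> : ((1 + 1) / 2 : R) = 1 by field.
done.
Qed.

Lemma chain_ge a ls b : chain a ls b -> forall l, l \in ls -> a <= dval R l.
Proof.
elim: ls a => [|l0 ls IH] a //= [H1 H2] l; rewrite inE => /orP [/eqP -> | Hl].
  by rewrite H1.
have := IH _ H2 l Hl; have := dwidth_gt0 l0; lra.
Qed.

Lemma pl_eval_cons l q ps (x : R) : pl_eval ((l, q) :: ps) x =
  if ps is [::] then aff l q x else
  if x < dval R l + dwidth R l then aff l q x else pl_eval ps x.
Proof. by case: ps. Qed.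

Lemma pl_eval_nth ls qs a b k (x : R) : size ls = size qs -> chain a ls b ->
  (k < size ls)%N -> inI (nth [::] ls k) x ->
  pl_eval (zip ls qs) x = aff (nth [::] ls k) (nth [::] qs k) x.
Proof.
elim: ls qs a k => [|l ls IH] [|q qs] a k // [Hs] [H1 H2] Hk Hx.
change (zip (l::ls) (q::qs)) with ((l,q) :: zip ls qs).
rewrite pl_eval_cons.
case: k Hk Hx => [|k] Hk Hx /=.
  case: (zip ls qs) => //. by move: Hx; rewrite /inI => /andP [_ ->].
have Hk' : (k < size ls)%N by [].
have Hge := chain_ge H2 (mem_nth [::] Hk').
case E: (zip ls qs).
  have := size_zip ls qs; rewrite E Hs minnn /= => H0; by move: Hk'; rewrite Hs -H0.
rewrite -E; move: Hx; rewrite /inI => /andP [Hx1 Hx2].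
have -> : (x < dval R l + dwidth R l) = false.
  apply/negbTE; rewrite -leNgt; exact: le_trans Hge Hx1.
apply: IH => //; first exact: H2. by rewrite /inI; apply/andP; split; [exact: Hx1 | exact: Hx2].
Qed.

Lemma diag_fun_leaf Tp Tm k (x : R) : nleaves Tp = nleaves Tm -> (k < nleaves Tp)%N ->
  inI (nth [::] (leaves Tp) k) x ->
  diag_fun Tp Tm x = aff (nth [::] (leaves Tp) k) (nth [::] (leaves Tm) k) x.
Proof.
move=> En Hk Hx; rewrite /diag_fun.
apply: (@pl_eval_nth _ _ 0 1) => //; rewrite ?size_leaves //.
exact: chain_leaves.
Qed.
End Real.

Lemma leftmost T : exists a, nseq a false \in leaves T.
Proof.
elim: T => [|l [a Ha] r _]; first by exists 0%N; rewrite inE.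
exists a.+1 => /=; rewrite mem_cat; apply/orP; left.
by apply/mapP; exists (nseq a false).
Qed.

Lemma prefix_leaf T p :
  (exists2 l, l \in leaves T & exists u, p = l ++ u) \/
  (exists2 l, l \in leaves T & exists a, l = p ++ nseq a false).
Proof.
elim: T p => [|l IHl r IHr] p.
  by left; exists [::]; rewrite ?inE //; exists p.
case: p => [|b p].
  by right; have [a Ha] := leftmost (Node l r); exists (nseq a false) => //; exists a.
case: b.
- case: (IHr p) => [[l' Hl' [u Ep]] | [l' Hl' [a Ea]]].
  + left; exists (true :: l'); last by exists u; rewrite Ep.
    by rewrite /= mem_cat; apply/orP; right; apply/mapP; exists l'.
  + right; exists (true :: l'); last by exists a; rewrite Ea.
    by rewrite /= mem_cat; apply/orP; right; apply/mapP; exists l'.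
- case: (IHl p) => [[l' Hl' [u Ep]] | [l' Hl' [a Ea]]].
  + left; exists (false :: l'); last by exists u; rewrite Ep.
    by rewrite /= mem_cat; apply/orP; left; apply/mapP; exists l'.
  + right; exists (false :: l'); last by exists a; rewrite Ea.
    by rewrite /= mem_cat; apply/orP; left; apply/mapP; exists l'.
Qed.

Lemma tL_zeros t a : tL (foldl lrb_step t (nseq a false)) = tL t.
Proof. elim: a t => [|a IH] t //=; by rewrite IH tL_f. Qed.

Lemma omega_zeros w a : omega (w ++ nseq a false) = omega w.
Proof. by rewrite /omega /LRB foldl_cat; apply: tL_zeros. Qed.

Lemma LRB_cat w u : LRB (w ++ u) = foldl lrb_step (LRB w) u.
Proof. by rewrite /LRB foldl_cat. Qed.

Section Tr.
Local Open Scope ring_scope.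

Lemma transfer (R : realFieldType) Tp Tm Tp' Tm' :
  nleaves Tp = nleaves Tm -> nleaves Tp' = nleaves Tm' ->
  (forall x : R, 0 <= x <= 1 -> diag_fun Tp' Tm' x = diag_fun Tp Tm x) ->
  CE Tp' Tm' -> forall k, (k < nleaves Tp)%N ->
  omega (nth [::] (leaves Tp) k) = omega (nth [::] (leaves Tm) k).
Proof.
move=> En En' Eg HC k Hk.
set p := nth [::] (leaves Tp) k; set q := nth [::] (leaves Tm) k.
have HD : forall x : R, inI p x -> diag_fun Tp Tm x = aff p q x.
  by move=> x Hx; apply: diag_fun_leaf.
have HD' : forall l, l \in leaves Tp' -> exists j, [/\ (j < nleaves Tp')%N,
    l = nth [::] (leaves Tp') j &
    forall x : R, inI l x -> diag_fun Tp' Tm' x = aff l (nth [::] (leaves Tm') j) x].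
  move=> l Hl; exists (index l (leaves Tp')).
  have Hj : (index l (leaves Tp') < nleaves Tp')%N by rewrite -size_leaves index_mem.
  split => //; first by rewrite nth_index.
  move=> x Hx; have E := nth_index [::] Hl; rewrite -{1}E.
  apply: diag_fun_leaf => //; by rewrite E.
case: (prefix_leaf Tp' p) => [[l Hl [u Ep]] | [l Hl [a El]]];
  have [j [Hj Elj Hx]] := HD' l Hl; set q' := nth [::] (leaves Tm') j in Hx.
- have E : forall x : R, inI p x -> aff p q x = aff p (q' ++ u) x.
    move=> x Hxp; rewrite -HD // -Eg; last exact: inI_01 Hxp.
    rewrite Hx; last by apply: (inI_cat (u:=u)); rewrite -Ep.
    by rewrite Ep aff_cat.
  have Eq : q = q' ++ u by apply: aff_inj; apply: E; [apply: inI_tp0 | apply: inI_tp1].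
  have EL := CE_LRB En' HC Hj; rewrite -Elj -/q' in EL.
  by rewrite /omega Eq Ep !LRB_cat EL.
- have E : forall x : R, inI l x -> aff l q' x = aff l (q ++ nseq a false) x.
    move=> x Hxl; rewrite -Hx // Eg; last exact: inI_01 Hxl.
    rewrite HD; last by apply: (inI_cat (u:=nseq a false)); rewrite -El.
    by rewrite El aff_cat.
  have Eq : q' = q ++ nseq a false by apply: aff_inj; apply: E; [apply: inI_tp0 | apply: inI_tp1].
  have EL := CE_LRB En' HC Hj; rewrite -Elj -/q' in EL.
  by rewrite -(omega_zeros p a) -(omega_zeros q a) -El -Eq /omega EL.
Qed.

End Tr.

Theorem proposition2p1 (R : realFieldType) (Tp Tm : tree) :
  diagram Tp Tm ->
  (in_F3 (@diag_fun R Tp Tm) <->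
   forall k, k < nleaves Tp ->
     omega (nth [::] (leaves Tp) k) = omega (nth [::] (leaves Tm) k)).
Proof.
rewrite /diagram => En; split.
- move=> [Tp' [Tm' [[En' Eg] Hc]]].
  apply: (@transfer R Tp Tm Tp' Tm') => //.
  exact: colorable_CE.
- move=> H; exists Tp, Tm; split; first by split.
  apply: CE_colorable => //; exact/omega_CE.
Qed.
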